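(* For $n\ge 1$ and all integers $k$, the numbers $T(n,k)$ satisfy $$T(n,k)=\lceil k/2\rceil T(n-1,k)+T(n-1,k-1)+(n-k+1)T(n-1,k-2),$$ with initial conditions $T(0,0)=1$ and $T(0,k)=0$ for $k\ne 0$.
   Context: For a permutation $\pi$ of $[n]=\{1,\dots,n\}$, a double descent is an index $i\in[n-2]$ with $\pi(i)>\pi(i+1)>\pi(i+2)$; $\pi$ is simsun if for every $k\in[n]$ the subword of $\pi$ consisting of the letters in $[k]$ (in order of appearance) has no double descents. Let $\mathcal{RS}_n$ be the set of simsun permutations of $[n]$. The number of up-down runs ${\rm uprun}(\pi)$ is the number of alternating runs of the sequence $0,\pi(1),\pi(2),\dots,\pi(n)$, i.e. one plus the number of interior positions of this sequence at which it changes direction (from increasing to decreasing or vice versa). Let $T(n,k)=\#\{\pi\in\mathcal{RS}_n:{\rm uprun}(\pi)=k\}$ for $n\ge1$ (and $T(n,k)=0$ for $k<0$). *)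

(* Defs.v *)
From mathcomp Require Import all_boot all_order all_algebra all_fingroup.
Set Implicit Arguments. Unset Strict Implicit. Unset Printing Implicit Defensive.
Import GRing.Theory Num.Theory.

(* A permutation p of [n] = {1..n} is represented by p : 'S_n (a permutation
   of 'I_n = {0..n-1}); its one-line word is pi(1),...,pi(n) with
   pi(i+1) = (p i) + 1. *)
Definition word n (p : 'S_n) : seq nat := [seq (p i).+1 | i <- enum 'I_n].

Definition has_double_descent (s : seq nat) : bool :=
  has (fun i => (nth 0 s i.+1 < nth 0 s i) && (nth 0 s i.+2 < nth 0 s i.+1))
      (iota 0 (size s - 2)).

Definition simsun n (p : 'S_n) : bool :=
  [forall k : 'I_n, ~~ has_double_descent [seq x <- word p | x <= k.+1]].

Definition direction_changes (s : seq nat) : nat :=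
  count (fun j => (nth 0 s j.-1 < nth 0 s j) != (nth 0 s j < nth 0 s j.+1))
        (iota 1 (size s - 2)).

(* number of up-down runs: alternating runs of 0, pi(1), ..., pi(n) *)
Definition uprun n (p : 'S_n) : nat := (direction_changes (0 :: word p)).+1.

Definition T (n : nat) (k : int) : int :=
  match n, k with
  | 0, Posz m => (m == 0)%:R
  | n'.+1, Posz m => (#|[set p : 'S_n'.+1 | simsun p && (uprun p == m)]|)%:Z
  | _, Negz _ => 0
  end.

(* Main.v *)
Require Import Defs.
From mathcomp Require Import all_boot all_order all_algebra all_fingroup.
From mathcomp Require Import zify.
Set Implicit Arguments. Unset Strict Implicit. Unset Printing Implicit Defensive.


Fixpoint Dc (pu : bool) (a : nat) (l : seq nat) : nat :=
  if l is b :: r then (pu != (a < b)) + Dc (a < b) b r else 0.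
Fixpoint ndd (pd : bool) (a : nat) (l : seq nat) : bool :=
  if l is b :: r then ~~ (pd && (b < a)) && ndd (b < a) b r else true.
Definition ins (j x : nat) (l : seq nat) := take j l ++ x :: drop j l.

Lemma ins0 x l : ins 0 x l = x :: l.
Proof. by rewrite /ins take0 drop0. Qed.
Lemma insS j x b r : ins j.+1 x (b :: r) = b :: ins j x r.
Proof. by []. Qed.
Lemma ins_nil j x : ins j x [::] = [:: x].
Proof. by case: j. Qed.

Lemma count_iotaS (P : pred nat) n :
  count P (iota 0 n.+1) = P 0 + count (fun j => P j.+1) (iota 0 n).
Proof. by rewrite /= -(addn0 1) iotaDl count_map. Qed.

Section Cnt.
Variable x : nat.

Definition cnt d pu a l :=
  count (fun j => ndd (~~ pu) a (ins j x l) &&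
                  (Dc pu a (ins j x l) == Dc pu a l + d)) (iota 0 (size l).+1).

Definition good pu a l := [/\ uniq (a :: l), all (fun y => y < x) (a :: l) & ndd (~~ pu) a l].

Lemma neq_ltn a b : a != b -> ~~ (a < b) = (b < a).
Proof. by move=> H; rewrite -leqNgt leq_eqVlt eq_sym (negbTE H). Qed.

Lemma cnt_cons d pu a b r : good pu a (b :: r) ->
  cnt d pu a (b :: r) =
   (ndd true b r && (~~ pu + (1 + Dc false b r) == (pu != (a < b)) + Dc (a < b) b r + d))
   + cnt d (a < b) b r.
Proof.
case=> /= /andP [Ha Hu] /and3P [Hax Hbx Hr] /andP [Hpd Hn].
have Hab : a != b by apply: contraNneq Ha => ->; rewrite inE eqxx.
rewrite /cnt count_iotaS; congr (_ + _).
  have xa : (x < a) = false by rewrite ltnNge ltnW.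
  have xb : (x < b) = false by rewrite ltnNge ltnW.
  rewrite ins0 /= Hax xa xb Hbx /= andbF /=.
  by case: pu Hpd.
apply: eq_count => j; rewrite insS /=.
by rewrite Hpd /= neq_ltn // -addnA eqn_add2l.
Qed.

Lemma cnt_nil d pu a : a < x -> cnt d pu a [::] = ((~~ pu : nat) == d).
Proof. by move=> Hax; rewrite /cnt /= addn0 Hax (ltnNge x a) (ltnW Hax) /= addn0; case: pu. Qed.

Lemma good_tail pu a b r : good pu a (b :: r) -> good (a < b) b r.
Proof.
case=> /= /andP [Ha Hu] /and3P [Hax Hbx Hr] /andP [Hpd Hn].
have Hab : a != b by apply: contraNneq Ha => ->; rewrite inE eqxx.
split => //=; first by rewrite Hbx.
by rewrite neq_ltn.
Qed.


Ltac beq := apply/idP/idP => /eqP ?; apply/eqP; lia.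

Lemma pos0 d pu a b r : good pu a (b :: r) ->
 (ndd true b r && (~~ pu + (1 + Dc false b r) == (pu != (a < b)) + Dc (a < b) b r + d)) =
 if b < a then d == 0 else if r is c :: _ then (b < c) && (d == 2) else d == 1.
Proof.
case=> /= /andP [Ha Hu] /and3P [Hax Hbx Hr] /andP [Hpd Hn].
have Hab : a != b by apply: contraNneq Ha => ->; rewrite inE eqxx.
case: (ltngtP a b) Hab Hpd Hn => //= Hab _.
  move=> _ Hn; clear Ha; case: r Hu Hr Hn => [|c r] Hu Hr Hn /=.
    by rewrite addn0; case: pu => /=; beq.
  move: Hn => /= Hn.
  have Hbc : b != c by move: Hu => /andP [Hu _]; apply: contraNneq Hu => ->; rewrite inE eqxx.
  case: (ltngtP b c) Hbc => //= Hbc _.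
    move: Hn; rewrite (ltnNge c b) (ltnW Hbc) /= => ->; case: pu => /=; beq.
case: pu => //= _ Hn; rewrite Hn /=; beq.
Qed.


Lemma good_neq pu a b r : good pu a (b :: r) -> a != b.
Proof. by case=> /= /andP [Ha _] _ _; apply: contraNneq Ha => ->; rewrite inE eqxx. Qed.
Lemma good_pd pu a b r : good pu a (b :: r) -> b < a -> pu.
Proof. by case=> _ _ /= /andP [Hpd _] Hba; move: Hpd; rewrite Hba andbT negbK. Qed.
Lemma good_x pu a l : good pu a l -> a < x.
Proof. by case=> _ /andP []. Qed.

Lemma cnt1 pu a l : good pu a l -> l != [::] -> cnt 1 pu a l = 1.
Proof.
elim: l pu a => [//|b r IH] pu a G _.
have G' := good_tail G; have Hab := good_neq G; have Hpd := good_pd G.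
rewrite cnt_cons // pos0 //.
case: r IH G G' Hpd => [|c r] IH G G' Hpd.
  rewrite cnt_nil ?(good_x G') //.
  by case: (ltngtP a b) Hab.
rewrite IH //; case: (ltngtP a b) Hab => //=; rewrite ?andbF. by [].
Qed.

Lemma cnt0 pu a l : good pu a l -> cnt 0 pu a l = (Dc pu a l + pu + 1)./2.
Proof.
elim: l pu a => [|b r IH] pu a G.
  by rewrite cnt_nil ?(good_x G) //; case: pu {G}.
have G' := good_tail G; have Hab := good_neq G; have Hpd := good_pd G.
rewrite cnt_cons // pos0 // IH //=.
case: (ltngtP a b) Hab Hpd => //= Hab _.
  by case: r {IH G G'} => [|c r]; case: pu => //=; rewrite ?andbF !add0n ?addn0 addn1.
move=> /(_ isT) ->; rewrite addn0 add1n addnS addn1 /=.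
by rewrite addn0 add0n addn1 uphalfE.
Qed.


Lemma cnt2 pu a b r : good pu a (b :: r) ->
  cnt 2 pu a (b :: r) + Dc pu a (b :: r) + (pu && (a < b)) = size (b :: r).
Proof.
elim: r pu a b => [|c r IH] pu a b G.
  have Hab := good_neq G; have Hpd := good_pd G.
  rewrite cnt_cons // pos0 // cnt_nil ?(good_x (good_tail G)) //=.
  by case: (ltngtP a b) Hab Hpd => //= _ _; case: pu {G} => // /(_ isT).
have G' := good_tail G; have Hab := good_neq G; have Hpd := good_pd G.
rewrite (cnt_cons _ G) (pos0 _ G) /=.
have := IH _ _ _ G'; rewrite /= => {}IH.
case: (ltngtP a b) Hab Hpd IH => //= _ _.
  case: (b < c); case: pu {G G'} => /= IH; lia.
move=> /(_ isT) -> IH; rewrite /=; lia.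
Qed.

Lemma crange pu a l j : good pu a l -> ndd (~~ pu) a (ins j x l) ->
  [|| Dc pu a (ins j x l) == Dc pu a l, Dc pu a (ins j x l) == Dc pu a l + 1
    | Dc pu a (ins j x l) == Dc pu a l + 2].
Proof.
elim: l pu a j => [|b r IH] pu a j G.
  by rewrite ins_nil /= (good_x G); case: pu {G}.
have G' := good_tail G; have Hab := good_neq G; have Hpd := good_pd G.
case: j => [|j].
  have := pos0 0 G; have := pos0 1 G; have := pos0 2 G.
  rewrite ins0 /= ?(good_x G) ?(ltnNge x a) ?(ltnW (good_x G)) /=.
  have Hx := good_x G'.
  have xb : (x < b) = false by rewrite ltnNge ltnW.
  rewrite xb Hx => H2 H1 H0 /andP [_ Hn]; rewrite Hn /= in H0 H1 H2.
  have eN : (pu != true) + ((true != false) + Dc false b r) = ~~ pu + (1 + Dc false b r) by case: pu {G H0 H1 H2 Hpd}.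
  rewrite eN.
  have : [|| ~~ pu + (1 + Dc false b r) == (pu != (a < b)) + Dc (a < b) b r + 0,
             ~~ pu + (1 + Dc false b r) == (pu != (a < b)) + Dc (a < b) b r + 1 |
             ~~ pu + (1 + Dc false b r) == (pu != (a < b)) + Dc (a < b) b r + 2].
    rewrite H0 H1 H2; case: (b < a) => //=; case: r {IH G H0 H1 H2 eN} G' Hn => [|c r] //= G'.
    have Hbc := good_neq G'.
    by case/andP; case: (ltngtP b c) Hbc.
  by move=> /or3P [H|H|H]; rewrite ?H ?orbT // -[X in _ == X]addn0 H.
rewrite insS /= => /andP [_ Hn].
have Hab' : ~~ (a < b) = (b < a) by rewrite neq_ltn.
move: (IH _ _ j G'); rewrite Hab' => /(_ Hn).
by rewrite -!addnA !eqn_add2l.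
Qed.

End Cnt.


Lemma iota0S n : iota 0 n.+1 = 0 :: map succn (iota 0 n).
Proof. by rewrite /= -(addn0 1) iotaDl. Qed.

Lemma hdd_cons a b c l : has_double_descent [:: a, b, c & l] =
  ((b < a) && (c < b)) || has_double_descent [:: b, c & l].
Proof.
rewrite /has_double_descent /= !subn2 /=.
by rewrite -(addn0 1) iotaDl has_map.
Qed.

Lemma hdd_short a b : has_double_descent [:: a; b] = false.
Proof. by []. Qed.

Lemma ndd_hdd a b l : ndd (b < a) b l = ~~ has_double_descent [:: a, b & l].
Proof.
elim: l a b => [|c l IH] a b //=.
by rewrite IH hdd_cons negb_or.
Qed.

Lemma ndd0 t : ndd false 0 t = ~~ has_double_descent t.
Proof.
case: t => [|b r] //=.
rewrite (ndd_hdd 0 b r).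
by case: r => [|c r] //; rewrite hdd_cons.
Qed.

Lemma dc_cons a b c l : direction_changes [:: a, b, c & l] =
  ((a < b) != (b < c)) + direction_changes [:: b, c & l].
Proof.
rewrite /direction_changes /= !subn2 /=.
by rewrite (iotaDl 2 0) (iotaDl 1 0) !count_map.
Qed.

Lemma dc_Dc a b l : direction_changes [:: a, b & l] = Dc (a < b) b l.
Proof.
elim: l a b => [|c l IH] a b //.
by rewrite dc_cons IH.
Qed.

Lemma dc0 t : 0 \notin t -> direction_changes (0 :: t) = Dc true 0 t.
Proof.
case: t => [|b r] //; rewrite inE negb_or => /andP [Hb _].
by rewrite dc_Dc /= lt0n eq_sym Hb.
Qed.

Fixpoint permsL n : seq (seq nat) :=
  if n is m.+1 then [seq ins i m.+1 s | s <- permsL m, i <- iota 0 m.+1]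
  else [:: [::]].

Lemma permsLS n : permsL n.+1 = [seq ins i n.+1 s | s <- permsL n, i <- iota 0 n.+1].
Proof. by []. Qed.

Lemma iota1S n : perm_eq (iota 1 n.+1) (n.+1 :: iota 1 n).
Proof.
have := iotaD 1 n 1; rewrite addn1 add1n /= => ->.
by rewrite perm_catC.
Qed.

Lemma ins_perm i x s : perm_eq (ins i x s) (x :: s).
Proof. by rewrite /ins -cat1s perm_catCA cat_take_drop. Qed.

Lemma permsL_perm n s : s \in permsL n -> perm_eq s (iota 1 n).
Proof.
elim: n s => [|n IH] s; first by rewrite inE => /eqP ->.
rewrite permsLS.
case/allpairsP => -[t i] /= [Ht _ ->].
rewrite (perm_trans (ins_perm _ _ _)) // perm_sym (perm_trans (iota1S n)) //.
by rewrite perm_cons perm_sym IH.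
Qed.

Lemma perm_permsL n s : perm_eq s (iota 1 n) -> s \in permsL n.
Proof.
elim: n s => [|n IH] s.
  by move/perm_size; case: s => //; rewrite inE.
rewrite permsLS.
move=> Hs; have Hin : n.+1 \in s by rewrite (perm_mem Hs) mem_iota add1n ltnSn.
have := perm_trans Hs (iota1S n).
case/splitPr: Hin Hs => s1 s2 _ Hp.
have H12 : perm_eq (s1 ++ s2) (iota 1 n).
  rewrite -(perm_cons n.+1); apply: perm_trans _ Hp; by rewrite perm_sym -[n.+1 :: s2]cat1s perm_catCA.
have -> : s1 ++ n.+1 :: s2 = ins (size s1) n.+1 (s1 ++ s2).
  by rewrite /ins take_size_cat // drop_size_cat.
apply: allpairs_f; first exact: IH.
rewrite mem_iota /= add0n ltnS.
by rewrite -(size_iota 1 n) -(perm_size H12) size_cat leq_addr.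
Qed.

Lemma size_takel' i (s : seq nat) : i <= size s -> size (take i s) = i.
Proof. exact: size_takel. Qed.

Lemma index_ins i x s : x \notin s -> i <= size s -> index x (ins i x s) = i.
Proof.
move=> Hx Hi; rewrite /ins index_cat.
have -> : (x \in take i s) = false by apply/negbTE; apply: contra Hx; apply: mem_take.
by rewrite size_takel //= eqxx addn0.
Qed.

Lemma rec_ins i x s : i <= size s -> take i (ins i x s) ++ drop i.+1 (ins i x s) = s.
Proof.
move=> Hi; rewrite /ins take_size_cat ?size_takel // drop_cat size_takel // ltnNge leqnSn /=.
by rewrite subSnn /= drop0 cat_take_drop.
Qed.

Lemma uniq_permsL n : uniq (permsL n).
Proof.
elim: n => [|n IH] //; rewrite permsLS.
apply: allpairs_uniq => //; first exact: iota_uniq.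
move=> [s i] [t j] Hp1 Hp2 /= E.
case: (allpairsP Hp1) => -[s1 i1] /= [H1 H2 [? ?]]; subst s i.
case: (allpairsP Hp2) => -[t1 j1] /= [H3 H4 [? ?]]; subst t j.
have Ps := permsL_perm H1; have Pt := permsL_perm H3.
have xs : n.+1 \notin s1 by rewrite (perm_mem Ps) mem_iota ltnn andbF.
have xt : n.+1 \notin t1 by rewrite (perm_mem Pt) mem_iota ltnn andbF.
have ss : size s1 = n by rewrite (perm_size Ps) size_iota.
have st : size t1 = n by rewrite (perm_size Pt) size_iota.
move: H2 H4; rewrite -[0 :: iota 1 n]/(iota 0 n.+1) !mem_iota /= !add0n !ltnS -{1}ss -st => H2 H4.
have eij : i1 = j1 by rewrite -(index_ins xs H2) E index_ins.
subst j1; congr (_, _).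
by rewrite -(rec_ins n.+1 H2) E rec_ins.
Qed.

Lemma size_permsL n : size (permsL n) = n`!.
Proof. by elim: n => [|n IH] //; rewrite permsLS size_allpairs IH size_iota factS mulnC. Qed.

Lemma card_count (T : finType) (P : pred T) : #|[set p | P p]| = count P (enum T).
Proof. rewrite enumT cardsE cardE /enum_mem size_filter unlock. apply: eq_count => x. by []. Qed.

Lemma word_perm n (p : 'S_n) : perm_eq (word p) (iota 1 n).
Proof.
have -> : word p = map (addn 1) (map val (map p (enum 'I_n))).
  by rewrite /word; elim: (enum 'I_n) => //= a l ->.
rewrite (iotaDl 1 0) -val_enum_ord.
apply: perm_map; apply: perm_map; apply: uniq_perm.
- by rewrite map_inj_uniq ?enum_uniq //; apply: perm_inj.
- exact: enum_uniq.
move=> i; rewrite mem_enum; apply/mapP; exists (p^-1 i)%g; rewrite ?mem_enum ?permKV //.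
Qed.

Lemma word_inj n : injective (@word n).
Proof.
move=> p q /eq_in_map E; apply/permP => i.
have : i \in enum 'I_n by rewrite mem_enum.
move/E => [] H; exact: val_inj.
Qed.

Lemma map_word_perm n : perm_eq (map (@word n) (enum 'S_n)) (permsL n).
Proof.
have U : uniq (map (@word n) (enum 'S_n)) by rewrite map_inj_uniq ?enum_uniq //; apply: word_inj.
apply: uniq_perm => //; first exact: uniq_permsL.
have Hsub : {subset map (@word n) (enum 'S_n) <= permsL n}.
  by move=> s /mapP [p _ ->]; apply: perm_permsL; apply: word_perm.
have Hsz : size (permsL n) <= size (map (@word n) (enum 'S_n)).
  by rewrite size_map -cardT card_Sn size_permsL.
by case: (uniq_min_size U Hsub Hsz).
Qed.

Lemma T_count m (k : nat) :
  T m.+1 (Posz k) = count (fun s => [forall k' : 'I_m.+1, ~~ has_double_descent [seq y <- s | y <= k'.+1]]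
                         && ((direction_changes (0 :: s)).+1 == k)) (permsL m.+1).
Proof.
rewrite /T card_count.
have /seq.permP <- := map_word_perm m.+1.
congr Posz; rewrite [in RHS]count_map enumT; apply: eq_count => p; by [].
Qed.


Lemma forall_all n (P : pred nat) : [forall k : 'I_n, P k.+1] = all P (iota 1 n).
Proof.
apply/forallP/allP => H.
  move=> j; rewrite mem_iota add1n => /andP [H1 H2].
  have Hj : j.-1 < n by lia.
  by have := H (Ordinal Hj); rewrite /= prednK.
by move=> k; apply: H; rewrite mem_iota /=; have := ltn_ord k; lia.
Qed.

Definition simL n (s : seq nat) := [forall k : 'I_n, ~~ has_double_descent [seq y <- s | y <= k.+1]].

Lemma iota1Sr n : iota 1 n.+1 = iota 1 n ++ [:: n.+1].
Proof. by have := iotaD 1 n 1; rewrite addn1 add1n /= => ->. Qed.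

Lemma sim_ins m s j : perm_eq s (iota 1 m.+1) ->
  simL m.+2 (ins j m.+2 s) = simL m.+1 s && ~~ has_double_descent (ins j m.+2 s).
Proof.
move=> Hs; rewrite /simL !(forall_all _ (fun k => ~~ has_double_descent [seq y <- _ | y <= k])).
rewrite iota1Sr all_cat all_seq1.
have -> : [seq y <- ins j m.+2 s | y <= m.+2] = ins j m.+2 s.
  apply/all_filterP; rewrite /ins all_cat /= leqnn /= -all_cat cat_take_drop.
  by apply/allP => y; rewrite (perm_mem Hs) mem_iota add1n => /andP [_ /ltnW].
congr (_ && _); apply: eq_in_all => k; rewrite mem_iota add1n ltnS => /andP [_ Hk].
rewrite /ins filter_cat /= leqNgt ltnS.
rewrite Hk /= -filter_cat cat_take_drop //.
Qed.

Lemma count_lin (T : Type) (P P0 P1 P2 : pred T) a b c s :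
  (forall j, (P j : nat) = a * P0 j + b * P1 j + c * P2 j) ->
  count P s = a * count P0 s + b * count P1 s + c * count P2 s.
Proof.
move=> H; elim: s => [|y s IH] /=; first by rewrite !muln0.
rewrite IH H; lia.
Qed.

Lemma aux D K d : d <= 2 ->
  (((D + d).+1 == K) : nat) = (K == D.+1) * (D + d == D + 0) + (K == D.+2) * (D + d == D + 1)
     + (K == D.+3) * (D + d == D + 2).
Proof.
rewrite !eqn_add2l; case: d => [|[|[|d]]] //= _; rewrite ?muln0 ?muln1 ?addn0 ?add0n;
  by rewrite ?addn0 ?addn1 ?addn2 ?addn3 eq_sym.
Qed.

Definition Q n K (t : seq nat) := simL n t && ((direction_changes (0 :: t)).+1 == K).

Lemma perm_facts n s : perm_eq s (iota 1 n) ->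
  [/\ 0 \notin s, uniq s, all (fun y => y < n.+1) s & size s = n].
Proof.
move=> Hs; split.
- by rewrite (perm_mem Hs) mem_iota.
- by rewrite (perm_uniq Hs) iota_uniq.
- by apply/allP => y; rewrite (perm_mem Hs) mem_iota add1n => /andP [].
- by rewrite (perm_size Hs) size_iota.
Qed.

Lemma simL_hdd n s : perm_eq s (iota 1 n) -> simL n s -> ~~ has_double_descent s.
Proof.
case: n => [|n] Hs.
  by have [_ _ _] := perm_facts Hs; case: s {Hs}.
move=> /forallP /(_ ord_max) /=.
have [_ _ Ha _] := perm_facts Hs.
by have -> : [seq y <- s | y <= n.+1] = s by apply/all_filterP.
Qed.

Lemma per_s m s K : perm_eq s (iota 1 m.+1) -> simL m.+1 s ->
  count (fun j => Q m.+2 K (ins j m.+2 s)) (iota 0 m.+2) =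
   (K == (Dc true 0 s).+1) * ((Dc true 0 s) + 2)./2 + (K == (Dc true 0 s).+2)
   + (K == (Dc true 0 s).+3) * (m.+1 - (Dc true 0 s).+1).
Proof.
move=> Hs Hsim; have [H0 Hu Ha Hsz] := perm_facts Hs.
have Hh := simL_hdd Hs Hsim.
set x := m.+2; set D := Dc true 0 s.
have G : good x true 0 s.
  by split => //=; rewrite ?H0 ?Hu ?Ha // ndd0.
have E : forall j, Q m.+2 K (ins j x s) =
   ndd false 0 (ins j x s) && ((Dc true 0 (ins j x s)).+1 == K).
  move=> j; rewrite /Q sim_ins // Hsim /= ndd0 dc0 //.
  by rewrite /ins mem_cat negb_or inE /= !(contra (@mem_take _ _ _ _)) ?(contra (@mem_drop _ _ _ _)).
rewrite (eq_count E).
have snil : s != [::] by apply/eqP => E0; move: Hsz; rewrite E0.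
have -> : iota 0 x = iota 0 (size s).+1 by rewrite Hsz.
rewrite (count_lin _ (a := (K == D.+1)) (b := (K == D.+2)) (c := (K == D.+3))
   (P0 := fun j => ndd (~~ true) 0 (ins j x s) && (Dc true 0 (ins j x s) == D + 0))
   (P1 := fun j => ndd (~~ true) 0 (ins j x s) && (Dc true 0 (ins j x s) == D + 1))
   (P2 := fun j => ndd (~~ true) 0 (ins j x s) && (Dc true 0 (ins j x s) == D + 2))).
  have C0 := cnt0 G; have C1 := cnt1 G snil.
  have C2 : cnt x 2 true 0 s + D + 1 = m.+1.
    rewrite /D -Hsz; move: G H0 snil; case: (s) => [|b r] // G H0 _.
    have := cnt2 G; rewrite /= => <-; congr (_ + _).
    by move: H0; rewrite inE negb_or eq_sym lt0n => /andP [->].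
  move: C0 C1 C2; rewrite /cnt -/D => -> -> C2.
  set c := count _ _ in C2 *.
  have -> : c = m.+1 - D.+1 by lia.
  by rewrite muln1 -(addnA D).
move=> j /=.
case Hn: (ndd false 0 (ins j x s)) => /=; last by rewrite !muln0.
have := crange G Hn.
rewrite -/D; case/or3P => /eqP ->.
- by move: (@aux D K 0 isT); rewrite !addn0.
- by rewrite aux.
- by rewrite aux.
Qed.

Lemma R0_le m s : perm_eq s (iota 1 m.+1) -> simL m.+1 s -> (Dc true 0 s).+1 <= m.+1.
Proof.
move=> Hs Hsim; have [H0 Hu Ha Hsz] := perm_facts Hs.
have Hh := simL_hdd Hs Hsim.
have G : good m.+2 true 0 s by split => //=; rewrite ?H0 ?Hu ?Ha // ndd0.
rewrite -Hsz; move: G H0 Hsz; case: (s) => [|b r] // G H0 _.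
have := cnt2 G; rewrite /= => <-.
have -> : 0 < b by move: H0; rewrite inE negb_or eq_sym lt0n => /andP [->].
by rewrite addn1 ltnS leq_addl.
Qed.

Import GRing.Theory Num.Theory.

Lemma cnt_allpairs (S U : Type) (P : pred U) (f : S -> nat -> U) s t :
  Posz (count P [seq f x y | x <- s, y <- t]) = (\sum_(x <- s) Posz (count (fun y => P (f x y)) t))%R.
Proof.
elim: s => [|a s IH]; first by rewrite big_nil.
by rewrite big_cons -IH /= count_cat count_map PoszD.
Qed.

Lemma count_sum (S : Type) (P : pred S) s :
  Posz (count P s) = (\sum_(x <- s) Posz (P x))%R.
Proof.
elim: s => [|a s IH]; first by rewrite big_nil.
by rewrite big_cons -IH /= PoszD.
Qed.

Local Open Scope ring_scope.

Definition R0 (s : seq nat) : nat := (Dc true 0 s).+1.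

Lemma TL m K : T m.+1 K =
  \sum_(s <- permsL m.+1) Posz (simL m.+1 s && (Posz (R0 s) == K)).
Proof.
case: K => [k|k].
  rewrite T_count count_sum; apply: eq_big_seq => s Hs.
  have [H0 _ _ _] := perm_facts (permsL_perm Hs).
  by rewrite dc0.
by rewrite big1 // => s _; rewrite andbF.
Qed.

Lemma TL2 m K : T m.+2 K =
  \sum_(s <- permsL m.+1) Posz (simL m.+1 s) *
    (Posz (Posz (R0 s) == K) * Posz (R0 s).+1./2 + Posz (Posz (R0 s).+1 == K)
     + Posz (Posz (R0 s).+2 == K) * Posz (m.+1 - R0 s)).
Proof.
case: K => [k|k]; last first.
  have E : forall a : nat, (Posz a == Negz k) = false by [].
  by rewrite big1 // => s _; rewrite !E !mul0r !add0r mulr0.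
rewrite (T_count m.+1) permsLS cnt_allpairs; apply: eq_big_seq => s Hs.
have Ps := permsL_perm Hs.
case Hsim : (simL m.+1 s).
  have := per_s k Ps Hsim; rewrite /Q => ->.
  rewrite mul1r /R0 !PoszD !PoszM; congr (_ + _ + _).
  - by rewrite eqz_nat eq_sym addn2.
  - by rewrite eqz_nat eq_sym.
  - by rewrite eqz_nat eq_sym.
rewrite mul0r; congr Posz; apply/eqP; rewrite -leqn0 leqNgt -has_count.
apply/negP => /hasP [j _]; rewrite -[X in X && _]/(simL m.+2 (ins j m.+2 s)) sim_ins // Hsim.
by [].
Qed.

Lemma pointwise m s K : s \in permsL m.+1 ->
  Posz (simL m.+1 s) *
    (Posz (Posz (R0 s) == K) * Posz (R0 s).+1./2 + Posz (Posz (R0 s).+1 == K)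
     + Posz (Posz (R0 s).+2 == K) * Posz (m.+1 - R0 s))
  = ((K + 1) %/ 2)%Z * Posz (simL m.+1 s && (Posz (R0 s) == K))
    + Posz (simL m.+1 s && (Posz (R0 s) == K - 1))
    + ((m.+2)%:Z - K + 1) * Posz (simL m.+1 s && (Posz (R0 s) == K - 2)).
Proof.
move=> Hs; have Ps := permsL_perm Hs.
case Hsim : (simL m.+1 s); last by rewrite /= !mul0r !mulr0 !addr0.
have Hr := R0_le Ps Hsim; rewrite -/(R0 s) in Hr.
move: Hr; set r := R0 s => Hr.
rewrite /= mul1r.
case: K => [k|k]; last first.
  have E : forall a : nat, (Posz a == Negz k) = false by [].
  have E1 : forall a : nat, (Posz a == Negz k - 1) = false.
    by move=> a; apply/negbTE; rewrite eq_sym subr_eq -PoszD.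
  have E2 : forall a : nat, (Posz a == Negz k - 2) = false.
    by move=> a; apply/negbTE; rewrite eq_sym subr_eq -PoszD.
  by rewrite !E !E1 !E2 /= !mulr0 !mul0r !addr0.
rewrite !eqz_nat.
have -> : (Posz r == Posz k - 1) = (k == r.+1) by rewrite eq_sym subr_eq -PoszD eqz_nat addn1.
have -> : (Posz r == Posz k - 2) = (k == r.+2) by rewrite eq_sym subr_eq -PoszD eqz_nat addn2.
have -> : ((Posz k + 1) %/ 2)%Z = Posz (k.+1./2) by rewrite -PoszD divz_nat divn2 addn1.
rewrite ![_ == k]eq_sym.
case: (k =P r) => [->|N0].
  have -> : (r == r.+1) = false by apply/eqP; lia.
  have -> : (r == r.+2) = false by apply/eqP; lia.
  by rewrite /= !mulr0 mulr1 !addr0 mul1r.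
case: (k =P r.+1) => [->|N1].
  have -> : (r.+1 == r.+2) = false by apply/eqP; lia.
  by rewrite /= !mulr0 !mul0r !add0r addr0.
case: (k =P r.+2) => [->|N2].
  rewrite /= !mulr0 !mul0r !add0r !mulr1 mul1r.
  lia.
by rewrite /= !mulr0 !mul0r !addr0.
Qed.

Lemma T0 K : T 0 K = Posz (K == 0).
Proof. by case: K => [[|k]|k]. Qed.

Theorem theorem9 :
  (T 0 0 = 1 /\ forall k : int, k != 0 -> T 0 k = 0) /\
  forall (n : nat) (k : int), (1 <= n)%N ->
    T n k = ((k + 1) %/ 2)%Z * T n.-1 k + T n.-1 (k - 1)
            + (n%:Z - k + 1) * T n.-1 (k - 2).
Proof.
split.
  split => // k; rewrite T0 => /negbTE -> //.
move=> n K; case: n => [//|[_|m _]].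
  rewrite (TL 0) (_ : permsL 1 = [:: [:: 1%N]]) // big_seq1 !T0.
  have -> : simL 1 [:: 1%N] = true by rewrite /simL (forall_all 1 (fun k => ~~ has_double_descent [seq y <- [:: 1%N] | (y <= k)%N])).
  rewrite /= subr_eq0 (subr_eq0 K 2).
  case: (eqVneq K 0) => [->|N0] //.
  case: (eqVneq K 1) => [->|N1] //.
  case: (eqVneq K 2) => [->|N2] //.
  by rewrite !mulr0 !addr0.
rewrite [_.+2.-1]/= TL2 !TL !mulr_sumr -!big_split /=.
apply: eq_big_seq => s Hs; exact: pointwise.
Qed.
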